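(* Let $(G,d)$ be a boundedly compact $p$-uniformly convex metric space with $p=c=2$, $f:G\to\mathbb{R}$ proper, convex and lower semicontinuous, $\lambda>0$, and $\tau\in(0,1/2]$. Then the relaxed prox mapping $T_\tau=(1-\tau)\mathrm{Id}\oplus\tau\,\mathrm{prox}^2_{f,\lambda}$ is $\alpha$-firmly nonexpansive on $G$ with constant $\alpha_\tau=1-\tau$, i.e. $d(T_\tau x,T_\tau y)^2\le d(x,y)^2-\frac{\tau}{1-\tau}\psi^{(2,2)}(x,y,T_\tau x,T_\tau y)$ for all $x,y\in G$.
   Context: $(G,d)$ uniquely geodesic with $d(z,(1-\tau)x\oplus\tau y)^2\le(1-\tau)d(z,x)^2+\tau d(z,y)^2-\tau(1-\tau)d(x,y)^2$ for all $\tau\in[0,1]$, $x,y,z$, where $(1-\tau)x\oplus\tau y$ is the point on the geodesic from $x$ to $y$ at distance $\tau d(x,y)$ from $x$; $T_\tau(x)=(1-\tau)x\oplus\tau\,\mathrm{prox}^2_{f,\lambda}(x)$. $f$ convex: $f((1-\tau)x\oplus\tau y)\le(1-\tau)f(x)+\tau f(y)$. $\mathrm{prox}^2_{f,\lambda}(x)=\operatorname{argmin}_y\{f(y)+\frac1{2\lambda}d(y,x)^2\}$. $\psi^{(2,2)}(x,y,u,v)=d(x,u)^2+d(y,v)^2+d(u,v)^2+d(x,y)^2-d(y,u)^2-d(x,v)^2$. *)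

(* Defs.v *)
From Stdlib Require Import Reals Lra ClassicalEpsilon.
Open Scope R_scope.

Section MetricDefs.
Context {G : Type} (d : G -> G -> R).

Definition is_metric : Prop :=
  (forall x y, d x y = 0 <-> x = y) /\
  (forall x y, d x y = d y x) /\
  (forall x y z, d x z <= d x y + d y z).

Definition is_geodesic (x y : G) (g : R -> G) : Prop :=
  g 0 = x /\ g (d x y) = y /\
  forall s t, 0 <= s <= d x y -> 0 <= t <= d x y -> d (g s) (g t) = Rabs (s - t).

Definition uniquely_geodesic : Prop :=
  forall x y, (exists g, is_geodesic x y g) /\
    forall g1 g2, is_geodesic x y g1 -> is_geodesic x y g2 ->
      forall t, 0 <= t <= d x y -> g1 t = g2 t.

(* (1-t) x (+) t y : the point on the (chosen) geodesic from x to y at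
   distance t * d x y from x (well defined when the space is uniquely geodesic) *)
Definition geo_comb (x y : G) (t : R) : G :=
  match excluded_middle_informative (exists g, is_geodesic x y g) with
  | left h => (proj1_sig (constructive_indefinite_description _ h)) (t * d x y)
  | right _ => x
  end.

Definition unif_convex_2 : Prop :=
  forall (t : R) x y z, 0 <= t <= 1 ->
    (d z (geo_comb x y t))^2 <=
      (1 - t) * (d z x)^2 + t * (d z y)^2 - t * (1 - t) * (d x y)^2.

Definition seq_conv (u : nat -> G) (x : G) : Prop :=
  forall e, 0 < e -> exists N, forall n, (N <= n)%nat -> d (u n) x < e.

(* boundedly compact: every closed ball is (sequentially, equivalently in a
   metric space) compact *)
Definition boundedly_compact : Prop :=
  forall (c : G) (r : R) (u : nat -> G), (forall n, d c (u n) <= r) ->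
    exists (phi : nat -> nat) (x : G),
      (forall n, (phi n < phi (S n))%nat) /\ d c x <= r /\
      seq_conv (fun n => u (phi n)) x.

Definition lsc (f : G -> R) : Prop :=
  forall u x, seq_conv u x ->
    forall e, 0 < e -> exists N, forall n, (N <= n)%nat -> f x - e < f (u n).

Definition convex_fun (f : G -> R) : Prop :=
  forall (t : R) x y, 0 <= t <= 1 ->
    f (geo_comb x y t) <= (1 - t) * f x + t * f y.

(* the prox mapping: argmin_y f y + d(y,x)^2 / (2 lam) (a chosen minimizer;
   defaults to x if no minimizer exists) *)
Definition is_prox_point (f : G -> R) (lam : R) (x p : G) : Prop :=
  forall y, f p + (d p x)^2 / (2 * lam) <= f y + (d y x)^2 / (2 * lam).

Definition prox (f : G -> R) (lam : R) (x : G) : G :=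
  match excluded_middle_informative (exists p, is_prox_point f lam x p) with
  | left h => proj1_sig (constructive_indefinite_description _ h)
  | right _ => x
  end.

Definition T_relax (f : G -> R) (lam tau : R) (x : G) : G :=
  geo_comb x (prox f lam x) tau.

Definition psi22 (x y u v : G) : R :=
  (d x u)^2 + (d y v)^2 + (d u v)^2 + (d x y)^2 - (d y u)^2 - (d x v)^2.

End MetricDefs.

(* Main.v *)
Require Import Defs.
From Stdlib Require Import Reals Lra Psatz Lia ClassicalEpsilon Classical.
Open Scope R_scope.

Lemma m_refl (G : Type) (d : G -> G -> R) : is_metric d -> forall x, d x x = 0.
Proof. intros [H _] x. apply H. reflexivity. Qed.

Lemma m_sym (G : Type) (d : G -> G -> R) : is_metric d -> forall x y, d x y = d y x.
Proof. intros [_ [H _]]. exact H. Qed.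

Lemma m_tri (G : Type) (d : G -> G -> R) : is_metric d -> forall x y z, d x z <= d x y + d y z.
Proof. intros [_ [_ H]]. exact H. Qed.

Lemma m_pos (G : Type) (d : G -> G -> R) : is_metric d -> forall x y, 0 <= d x y.
Proof.
  intros Hm x y. pose proof (m_tri G d Hm x y x). rewrite (m_refl G d Hm) in H.
  rewrite (m_sym G d Hm y x) in H. lra.
Qed.

Lemma geo_spec (G : Type) (d : G -> G -> R) : uniquely_geodesic d ->
  forall x y, exists g, is_geodesic d x y g /\ forall t, geo_comb d x y t = g (t * d x y).
Proof.
  intros Hu x y. unfold geo_comb.
  destruct (excluded_middle_informative (exists g, is_geodesic d x y g)) as [h|h].
  - exists (proj1_sig (constructive_indefinite_description _ h)). split.
    + exact (proj2_sig (constructive_indefinite_description _ h)).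
    + intros; reflexivity.
  - exfalso. apply h. apply (proj1 (Hu x y)).
Qed.

Lemma geo_dist (G : Type) (d : G -> G -> R) : is_metric d -> uniquely_geodesic d ->
  forall x y t, 0 <= t <= 1 ->
  d x (geo_comb d x y t) = t * d x y /\ d (geo_comb d x y t) y = (1 - t) * d x y.
Proof.
  intros Hm Hu x y t Ht. destruct (geo_spec G d Hu x y) as [g [[g0 [g1 gi]] e]].
  rewrite e. pose proof (m_pos G d Hm x y) as hp.
  assert (h1 : 0 <= t * d x y <= d x y) by nra.
  split.
  - rewrite <- g0 at 1. rewrite gi by lra. rewrite Rabs_left1 by lra. ring.
  - rewrite <- g1 at 2. rewrite gi by lra. rewrite Rabs_left1 by nra. ring.
Qed.

Lemma geo_sub (G : Type) (d : G -> G -> R) : is_metric d -> uniquely_geodesic d ->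
  forall x p s k, 0 <= s <= 1 -> 0 <= k <= 1 ->
  geo_comb d x (geo_comb d x p s) k = geo_comb d x p (k * s).
Proof.
  intros Hm Hu x p s k Hs Hk.
  destruct (geo_spec G d Hu x p) as [g [[g0 [g1 gi]] e]].
  set (w := geo_comb d x p s).
  assert (dw : d x w = s * d x p) by (apply (geo_dist G d Hm Hu); lra).
  pose proof (m_pos G d Hm x p) as hp.
  destruct (geo_spec G d Hu x w) as [h [hg eh]].
  assert (gg : is_geodesic d x w g).
  { split; [exact g0|]. split.
    - rewrite dw. unfold w. rewrite e. reflexivity.
    - intros a b Ha Hb. rewrite dw in Ha, Hb. apply gi; nra. }
  rewrite eh. rewrite (proj2 (Hu x w) h g hg gg).
  - rewrite e, dw. f_equal. ring.
  - rewrite dw. clear -Hs Hk hp. assert (0 <= s * d x p) by nra. split; nra.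
Qed.

Lemma BN (G : Type) (d : G -> G -> R) : is_metric d -> uniquely_geodesic d -> unif_convex_2 d ->
  forall a b c e, (d a c)^2 + (d b e)^2 <= (d a b)^2 + (d b c)^2 + (d c e)^2 + (d e a)^2.
Proof.
  intros Hm Hu Hc a b c e.
  set (m := geo_comb d a c (1/2)).
  pose proof (Hc (1/2) a c b ltac:(lra)) as h1.
  pose proof (Hc (1/2) a c e ltac:(lra)) as h2.
  fold m in h1, h2.
  pose proof (m_tri G d Hm b m e) as t1.
  pose proof (m_pos G d Hm b m). pose proof (m_pos G d Hm m e).
  pose proof (m_pos G d Hm b e).
  rewrite (m_sym G d Hm m e) in t1.
  rewrite (m_sym G d Hm b a) in h1. rewrite (m_sym G d Hm e c) in h2.
  pose proof (m_pos G d Hm e m).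
  assert (0 <= (d b m - d e m)^2) by apply pow2_ge_0.
  assert ((d b e)^2 <= (d b m + d e m)^2).
  { apply pow_incr. lra. }
  assert ((d b e)^2 <= 2*((d b m)^2 + (d e m)^2)) by nra.
  nra.
Qed.

Lemma var_ineq (G : Type) (d : G -> G -> R) (f : G -> R) (lam : R) :
  is_metric d -> uniquely_geodesic d -> unif_convex_2 d -> convex_fun d f -> 0 < lam ->
  forall x p, is_prox_point d f lam x p -> forall z,
  f p + (d p x)^2/(2*lam) + (d p z)^2/(2*lam) <= f z + (d z x)^2/(2*lam).
Proof.
  intros Hm Hu Hc Hf Hl x p Hp z.
  set (c := / (2*lam)).
  assert (hc : 0 < c) by (unfold c; apply Rinv_0_lt_compat; lra).
  unfold Rdiv. fold c.
  set (A := (d p x)^2). set (Z := (d z x)^2). set (P := (d p z)^2).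
  assert (key : forall t, 0 < t <= 1 -> (1-t)*(P*c) <= f z + Z*c - f p - A*c).
  { intros t Ht. set (w := geo_comb d p z t).
    pose proof (Hp w) as hp. unfold Rdiv in hp. fold c in hp.
    pose proof (Hf t p z ltac:(lra)) as hf. fold w in hf.
    pose proof (Hc t p z x ltac:(lra)) as hcn. fold w in hcn.
    rewrite (m_sym G d Hm x w), (m_sym G d Hm x p), (m_sym G d Hm x z) in hcn.
    fold A Z in hcn. fold P in hcn.
    pose proof (Rmult_le_compat_r c _ _ (Rlt_le _ _ hc) hcn) as hcn'.
    assert (h : t * ((1-t)*(P*c)) <= t * (f z + Z*c - f p - A*c)) by (fold A in hp; lra).
    apply Rmult_le_reg_l with t; lra. }
  assert (hP : 0 <= P*c) by (unfold P; apply Rmult_le_pos; [apply pow2_ge_0 | lra]).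
  pose proof (key 1 ltac:(lra)) as k1.
  destruct (Rle_or_lt (P*c) (f z + Z*c - f p - A*c)) as [h|h]; [lra|].
  exfalso.
  remember (P*c) as Q eqn:EQ. remember (f z + Z*c - f p - A*c) as De eqn:ED.
  assert (hQ : 0 < Q) by lra.
  pose proof (key ((Q - De)/(2*Q))) as k2.
  assert (ht : 0 < (Q - De)/(2*Q) <= 1).
  { split. apply Rdiv_lt_0_compat; lra.
    apply Rmult_le_reg_r with (2*Q); [lra|]. field_simplify; lra. }
  specialize (k2 ht).
  assert (e : (1 - (Q - De)/(2*Q)) * Q = (Q + De)/2) by (field; lra).
  lra.
Qed.

Lemma H0_of_prox (G : Type) (d : G -> G -> R) (f : G -> R) (lam : R) :
  is_metric d -> uniquely_geodesic d -> unif_convex_2 d -> convex_fun d f -> 0 < lam ->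
  forall x y p q, is_prox_point d f lam x p -> is_prox_point d f lam y q ->
  (d x p)^2 + (d y q)^2 + 2 * (d p q)^2 <= (d x q)^2 + (d y p)^2.
Proof.
  intros Hm Hu Hc Hf Hl x y p q Hp Hq.
  pose proof (var_ineq G d f lam Hm Hu Hc Hf Hl x p Hp q) as h1.
  pose proof (var_ineq G d f lam Hm Hu Hc Hf Hl y q Hq p) as h2.
  rewrite (m_sym G d Hm p x), (m_sym G d Hm q x) in h1.
  rewrite (m_sym G d Hm q y), (m_sym G d Hm q p), (m_sym G d Hm p y) in h2.
  set (c := / (2*lam)) in *.
  assert (hc : 0 < c) by (unfold c; apply Rinv_0_lt_compat; lra).
  unfold Rdiv in h1, h2. fold c in h1, h2.
  assert (h : ((d x p)^2 + (d y q)^2 + 2 * (d p q)^2) * c <= ((d x q)^2 + (d y p)^2) * c) by lra.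
  apply Rmult_le_reg_r in h; lra.
Qed.

Lemma phi_ge (phi : nat -> nat) : (forall n, (phi n < phi (S n))%nat) -> forall n, (n <= phi n)%nat.
Proof. intros H n. induction n; [lia|]. specialize (H n). lia. Qed.

Lemma bdd_ball (G : Type) (d : G -> G -> R) (f : G -> R) :
  boundedly_compact d -> lsc d f ->
  forall c r, exists m, forall z, d c z <= r -> m <= f z.
Proof.
  intros Hbc Hl c r.
  apply NNPP. intro Hno.
  assert (H : forall n : nat, exists z, d c z <= r /\ f z < - INR n).
  { intro n. apply NNPP. intro hn. apply Hno. exists (- INR n). intros z hz.
    apply Rnot_lt_le. intro hlt. apply hn. exists z. auto. }
  set (u := fun n => proj1_sig (constructive_indefinite_description _ (H n))).
  assert (hu : forall n, d c (u n) <= r /\ f (u n) < - INR n).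
  { intro n. unfold u. exact (proj2_sig (constructive_indefinite_description _ (H n))). }
  destruct (Hbc c r u (fun n => proj1 (hu n))) as [phi [x0 [hinc [_ hconv]]]].
  destruct (Hl _ _ hconv 1 ltac:(lra)) as [N hN].
  destruct (INR_archimed 1 (1 - f x0) ltac:(lra)) as [n0 hn0].
  specialize (hN (N + n0)%nat ltac:(lia)).
  pose proof (proj2 (hu (phi (N + n0)%nat))) as h1.
  pose proof (phi_ge phi hinc (N + n0)%nat) as h2.
  apply le_INR in h2. rewrite plus_INR in h2.
  pose proof (pos_INR N). lra.
Qed.

Lemma lin_lower (G : Type) (d : G -> G -> R) (f : G -> R) :
  is_metric d -> uniquely_geodesic d -> convex_fun d f ->
  forall x m1, (forall z, d x z <= 1 -> m1 <= f z) ->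
  forall z, m1 - (f x - m1) * d x z <= f z.
Proof.
  intros Hm Hu Hf x m1 Hb z.
  assert (hK : 0 <= f x - m1) by (assert (h := Hb x); rewrite m_refl in h; [lra|exact Hm]).
  pose proof (m_pos G d Hm x z) as hD.
  destruct (Rle_or_lt (d x z) 1) as [h|h].
  - specialize (Hb z h). nra.
  - set (D := d x z) in *. set (t := / D).
    assert (ht : 0 <= t <= 1).
    { unfold t. split. left; apply Rinv_0_lt_compat; lra.
      rewrite <- Rinv_1. apply Rinv_le_contravar; lra. }
    assert (hDt : D * t = 1) by (unfold t; field; lra).
    pose proof (proj1 (geo_dist G d Hm Hu x z t ht)) as hdc. fold D in hdc.
    assert (hc1 : d x (geo_comb d x z t) <= 1) by (rewrite hdc; lra).
    pose proof (Hb _ hc1) as hb.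
    pose proof (Hf t x z ht) as hf.
    assert (h2 : D * m1 <= D * ((1 - t) * f x + t * f z)) by (apply Rmult_le_compat_l; lra).
    assert (h3 : D * ((1 - t) * f x + t * f z) = (D - 1) * f x + f z).
    { replace (D * ((1 - t) * f x + t * f z)) with (D * f x - (D*t) * f x + (D*t) * f z) by ring.
      rewrite hDt. ring. }
    nra.
Qed.

Lemma prox_exists (G : Type) (d : G -> G -> R) (f : G -> R) (lam : R) :
  is_metric d -> uniquely_geodesic d -> boundedly_compact d -> convex_fun d f -> lsc d f -> 0 < lam ->
  forall x, exists p, is_prox_point d f lam x p.
Proof.
  intros Hm Hu Hbc Hf Hl Hlam x.
  set (g := fun z => f z + (d z x)^2/(2*lam)).
  destruct (bdd_ball G d f Hbc Hl x 1) as [m1 Hm1].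
  set (K := f x - m1).
  assert (hK : 0 <= K) by (assert (h := Hm1 x); rewrite m_refl in h; [unfold K; lra|exact Hm]).
  pose proof (lin_lower G d f Hm Hu Hf x m1 Hm1) as HL. fold K in HL.
  assert (hgq : forall z, 0 <= (d z x)^2/(2*lam)).
  { intro z. unfold Rdiv; apply Rmult_le_pos; [apply pow2_ge_0|left; apply Rinv_0_lt_compat; lra]. }
  assert (hgx : g x = f x) by (unfold g; rewrite m_refl; [unfold Rdiv; ring|exact Hm]).
  set (R0 := 4*lam*K + 1).
  assert (Hfar : forall z, R0 < d x z -> f x < g z).
  { intros z hz. set (D := d x z) in *.
    assert (hD1 : 1 <= D) by (unfold R0 in hz; nra).
    assert (hsq : 2*lam*(K*D + K) < D^2).
    { assert (D * (D - 2*lam*K) > D * (2*lam*K+1)) by (unfold R0 in hz; nra). nra. }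
    assert (hq : K*D + K < D^2/(2*lam)).
    { apply Rmult_lt_reg_l with (2*lam); [lra|]. field_simplify; lra. }
    specialize (HL z). fold D in HL. unfold g. rewrite (m_sym G d Hm z x). fold D.
    unfold K in *. lra. }
  set (E := fun r => exists z, d x z <= R0 /\ r = - g z).
  assert (hEb : bound E).
  { exists (-(m1 - K*R0)). intros r [z [hz ->]].
    specialize (HL z). specialize (hgq z). unfold g.
    assert (K * d x z <= K * R0) by (apply Rmult_le_compat_l; lra). lra. }
  assert (hR0 : 0 <= R0) by (unfold R0; nra).
  assert (hEn : exists r, E r).
  { exists (- g x). exists x. split; [rewrite m_refl; [lra|exact Hm]|reflexivity]. }
  destruct (completeness E hEb hEn) as [M [HMub HMl]].
  set (I := - M).
  assert (HI : forall z, d x z <= R0 -> I <= g z).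
  { intros z hz. assert (h := HMub (- g z) (ex_intro _ z (conj hz eq_refl))). unfold I. lra. }
  assert (Hseq : forall n : nat, exists z, d x z <= R0 /\ g z < I + / (INR n + 1)).
  { intro n. apply NNPP. intro hn.
    assert (he : 0 < / (INR n + 1)) by (apply Rinv_0_lt_compat; pose proof (pos_INR n); lra).
    assert (hub : is_upper_bound E (M - / (INR n + 1))).
    { intros r [z [hz ->]]. apply Rnot_lt_le. intro hlt. apply hn. exists z. split; [exact hz|].
      unfold I. lra. }
    specialize (HMl _ hub). lra. }
  set (u := fun n => proj1_sig (constructive_indefinite_description _ (Hseq n))).
  assert (hu : forall n, d x (u n) <= R0 /\ g (u n) < I + / (INR n + 1)).
  { intro n. unfold u. exact (proj2_sig (constructive_indefinite_description _ (Hseq n))). }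
  destruct (Hbc x R0 u (fun n => proj1 (hu n))) as [phi [zs [hinc [hzs hconv]]]].
  assert (Hmin : g zs <= I).
  { apply Rnot_lt_le. intro hlt. set (e := (g zs - I)/3).
    assert (he : 0 < e) by (unfold e; lra).
    destruct (Hl _ _ hconv e he) as [N1 hN1].
    set (eps := e*(2*lam)/(2*R0+1)).
    assert (heps : 0 < eps) by (unfold eps; apply Rdiv_lt_0_compat; nra).
    destruct (hconv eps heps) as [N2 hN2].
    destruct (INR_archimed e 1 he) as [n3 hn3].
    set (n := (N1 + N2 + n3)%nat).
    specialize (hN1 n ltac:(unfold n; lia)). specialize (hN2 n ltac:(unfold n; lia)).
    set (v := u (phi n)) in *.
    pose proof (proj2 (hu (phi n))) as hv. fold v in hv.
    pose proof (phi_ge phi hinc n) as hpn. apply le_INR in hpn.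
    assert (hn3' : INR n3 <= INR n) by (apply le_INR; unfold n; lia).
    assert (hinv : / (INR (phi n) + 1) < e).
    { pose proof (pos_INR n3).
      apply Rmult_lt_reg_l with (INR (phi n) + 1); [lra|].
      rewrite Rinv_r by lra. nra. }
    pose proof (m_tri G d Hm zs v x) as t1.
    pose proof (m_tri G d Hm x v zs) as t2.
    pose proof (proj1 (hu (phi n))) as hvR. fold v in hvR.
    rewrite (m_sym G d Hm zs v) in t1.
    rewrite (m_sym G d Hm x v) in hvR. rewrite (m_sym G d Hm x zs) in hzs, t2.
    pose proof (m_pos G d Hm v zs). pose proof (m_pos G d Hm v x). pose proof (m_pos G d Hm zs x).
    assert (hdd : (d zs x)^2 - (d v x)^2 <= (2*R0) * d v zs).
    { replace ((d zs x)^2 - (d v x)^2) with ((d zs x - d v x)*(d zs x + d v x)) by ring.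
      assert (d zs x - d v x <= d v zs) by lra.
      assert (d zs x + d v x <= 2*R0) by lra.
      destruct (Rle_or_lt (d zs x - d v x) 0); nra. }
    assert (hdd2 : (2*R0) * d v zs <= (2*R0+1) * eps) by nra.
    assert (hepsE : (2*R0+1) * eps = e*(2*lam)) by (unfold eps; field; lra).
    assert (hq : (d zs x)^2/(2*lam) - (d v x)^2/(2*lam) <= e).
    { replace ((d zs x)^2/(2*lam) - (d v x)^2/(2*lam)) with (((d zs x)^2 - (d v x)^2)/(2*lam)) by (field; lra).
      apply Rmult_le_reg_l with (2*lam); [lra|]. field_simplify; [|lra]. nra. }
    assert (eg1 : g v = f v + (d v x)^2/(2*lam)) by reflexivity.
    assert (eg2 : g zs = f zs + (d zs x)^2/(2*lam)) by reflexivity.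
    assert (ee : 3*e = g zs - I) by (unfold e; field).
    lra. }
  exists zs. intro y. fold (g zs). fold (g y).
  destruct (Rle_or_lt (d x y) R0) as [hy|hy].
  - specialize (HI y hy). lra.
  - specialize (Hfar y hy). assert (HIx := HI x ltac:(rewrite m_refl; [lra|exact Hm])). lra.
Qed.

Lemma prox_spec (G : Type) (d : G -> G -> R) (f : G -> R) (lam : R) x :
  (exists p, is_prox_point d f lam x p) -> is_prox_point d f lam x (prox d f lam x).
Proof.
  intro h. unfold prox. destruct (excluded_middle_informative _) as [h'|h'].
  - exact (proj2_sig (constructive_indefinite_description _ h')).
  - contradiction.
Qed.

Lemma strong (t k a2 b2 Duv Dyu Dxv Duz Dvw Dqw Dxq Dpz Dyp Dpq : R) :
  0 < t -> t <= 1/2 -> k * (1 - t) = t ->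
  Duv <= (1-k)*Dyu + k*Duz - k*(1-k)*((1-t)^2*b2) ->
  Duv <= (1-k)*Dxv + k*Dvw - k*(1-k)*((1-t)^2*a2) ->
  Dxq + Dvw <= Dxv + (1-t)^2*b2 + Dqw + (1-t)^2*a2 ->
  Dyp + Duz <= Dyu + (1-t)^2*a2 + Dpz + (1-t)^2*b2 ->
  Dqw <= (1-(1-t))*Dxq + (1-t)*Dpq - (1-t)*(1-(1-t))*a2 ->
  Dpz <= (1-(1-t))*Dyp + (1-t)*Dpq - (1-t)*(1-(1-t))*b2 ->
  a2 + b2 + 2*Dpq <= Dxq + Dyp ->
  2*Duv + t^2*(a2+b2) <= Dxv + Dyu.
Proof.
  intros Ht Ht2 hk c1 c2 b1 b2' hq hp h0.
  assert (k0 : 0 <= k). { assert (1 - t > 0) by lra. nra. }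
  assert (b1' : 0 <= Dxv + (1-t)^2*b2 + Dqw + (1-t)^2*a2 - Dxq - Dvw) by lra.
  assert (b2'' : 0 <= Dyu + (1-t)^2*a2 + Dpz + (1-t)^2*b2 - Dyp - Duz) by lra.
  pose proof (Rmult_le_compat_l k _ _ k0 b1') as kb1.
  pose proof (Rmult_le_compat_l k _ _ k0 b2'') as kb2.
  pose proof (Rmult_le_compat_l k _ _ k0 hq) as khq.
  pose proof (Rmult_le_compat_l k _ _ k0 hp) as khp.
  assert (e1 : k * ((1-t)*Dpq) = t*Dpq) by (replace (k * ((1-t)*Dpq)) with ((k*(1-t))*Dpq) by ring; rewrite hk; ring).
  assert (e3 : k*((1-t)*(1-(1-t))*a2) = t*t*a2) by (replace (k*((1-t)*(1-(1-t))*a2)) with ((k*(1-t))*t*a2) by ring; rewrite hk; ring).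
  assert (e4 : k*((1-t)*(1-(1-t))*b2) = t*t*b2) by (replace (k*((1-t)*(1-(1-t))*b2)) with ((k*(1-t))*t*b2) by ring; rewrite hk; ring).
  assert (e5 : k*(1-k)*((1-t)^2*a2) = (t - k*t)*(1-t)*a2) by (replace (k*(1-k)*((1-t)^2*a2)) with ((k*(1-t))*(1-t)*a2 - k*(k*(1-t))*(1-t)*a2) by ring; rewrite hk; ring).
  assert (e6 : k*(1-k)*((1-t)^2*b2) = (t - k*t)*(1-t)*b2) by (replace (k*(1-k)*((1-t)^2*b2)) with ((k*(1-t))*(1-t)*b2 - k*(k*(1-t))*(1-t)*b2) by ring; rewrite hk; ring).
  assert (e7 : k*((1-t)^2*a2) = t*(1-t)*a2) by (replace (k*((1-t)^2*a2)) with ((k*(1-t))*(1-t)*a2) by ring; rewrite hk; ring).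
  assert (e8 : k*((1-t)^2*b2) = t*(1-t)*b2) by (replace (k*((1-t)^2*b2)) with ((k*(1-t))*(1-t)*b2) by ring; rewrite hk; ring).
  nra.
Qed.

Lemma sqs (G : Type) (d : G -> G -> R) : is_metric d -> forall a b, (d a b)^2 = (d b a)^2.
Proof. intros Hm a b. rewrite (m_sym G d Hm a b). reflexivity. Qed.

Theorem mainTheorem15 (G : Type) (d : G -> G -> R)
  (Hmetric : is_metric d) (Hgeo : uniquely_geodesic d)
  (Hconv : unif_convex_2 d) (Hbc : boundedly_compact d)
  (f : G -> R) (Hf_convex : convex_fun d f) (Hf_lsc : lsc d f)
  (lam : R) (Hlam : 0 < lam) (tau : R) (Htau : 0 < tau <= 1 / 2) :
  forall x y : G,
    (d (T_relax d f lam tau x) (T_relax d f lam tau y))^2 <=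
      (d x y)^2 - tau / (1 - tau) *
        psi22 d x y (T_relax d f lam tau x) (T_relax d f lam tau y).
Proof.
  intros x y.
  pose proof (prox_spec G d f lam x (prox_exists G d f lam Hmetric Hgeo Hbc Hf_convex Hf_lsc Hlam x)) as Hp.
  pose proof (prox_spec G d f lam y (prox_exists G d f lam Hmetric Hgeo Hbc Hf_convex Hf_lsc Hlam y)) as Hq.
  unfold T_relax.
  set (p := prox d f lam x) in *. set (q := prox d f lam y) in *.
  pose proof (H0_of_prox G d f lam Hmetric Hgeo Hconv Hf_convex Hlam x y p q Hp Hq) as h0.
  set (t := tau) in *.
  set (k := t / (1 - t)).
  assert (hk : k * (1 - t) = t) by (unfold k; field; lra).
  assert (hk01 : 0 <= k <= 1).
  { unfold k. split. apply Rmult_le_pos; [lra| left; apply Rinv_0_lt_compat; lra].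
    apply Rmult_le_reg_r with (1 - t); [lra|]. unfold Rdiv. rewrite Rmult_assoc, Rinv_l by lra. lra. }
  set (u := geo_comb d x p t). set (v := geo_comb d y q t).
  set (w := geo_comb d x p (1 - t)). set (z := geo_comb d y q (1 - t)).
  assert (hu : geo_comb d x w k = u).
  { unfold w, u. rewrite (geo_sub G d Hmetric Hgeo) by lra. rewrite hk. reflexivity. }
  assert (hv : geo_comb d y z k = v).
  { unfold z, v. rewrite (geo_sub G d Hmetric Hgeo) by lra. rewrite hk. reflexivity. }
  destruct (geo_dist G d Hmetric Hgeo x p t ltac:(lra)) as [dxu dup]. fold u in dxu, dup.
  destruct (geo_dist G d Hmetric Hgeo y q t ltac:(lra)) as [dyv dvq]. fold v in dyv, dvq.
  destruct (geo_dist G d Hmetric Hgeo x p (1-t) ltac:(lra)) as [dxw _]. fold w in dxw.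
  destruct (geo_dist G d Hmetric Hgeo y q (1-t) ltac:(lra)) as [dyz _]. fold z in dyz.
  set (a2 := (d x p)^2). set (b2 := (d y q)^2).
  assert (Exu : (d x u)^2 = t^2 * a2) by (rewrite dxu; unfold a2; ring).
  assert (Eup : (d u p)^2 = (1-t)^2 * a2) by (rewrite dup; unfold a2; ring).
  assert (Exw : (d x w)^2 = (1-t)^2 * a2) by (rewrite dxw; unfold a2; ring).
  assert (Eyv : (d y v)^2 = t^2 * b2) by (rewrite dyv; unfold b2; ring).
  assert (Evq : (d v q)^2 = (1-t)^2 * b2) by (rewrite dvq; unfold b2; ring).
  assert (Eyz : (d y z)^2 = (1-t)^2 * b2) by (rewrite dyz; unfold b2; ring).
  pose proof (Hconv k y z u hk01) as c1. rewrite hv, Eyz in c1.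
  pose proof (Hconv k x w v hk01) as c2. rewrite hu, Exw in c2.
  pose proof (BN G d Hmetric Hgeo Hconv x v q w) as b1.
  pose proof (BN G d Hmetric Hgeo Hconv y u p z) as b2'.
  pose proof (Hconv (1-t) x p q ltac:(lra)) as hq. fold w in hq.
  pose proof (Hconv (1-t) y q p ltac:(lra)) as hp. fold z in hp.
  pose proof (BN G d Hmetric Hgeo Hconv x u v y) as bpsi.
  rewrite (sqs G d Hmetric w x), Exw, Evq in b1.
  rewrite (sqs G d Hmetric z y), Eyz, Eup in b2'.
  fold a2 in hq. fold b2 in hp.
  rewrite (sqs G d Hmetric u y) in c1.
  rewrite (sqs G d Hmetric v u), (sqs G d Hmetric v x), (sqs G d Hmetric v w) in c2.
  rewrite (sqs G d Hmetric q w), (sqs G d Hmetric q x), (sqs G d Hmetric q p) in hq.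
  rewrite (sqs G d Hmetric p z), (sqs G d Hmetric p y) in hp.
  pose proof (strong t k a2 b2 ((d u v)^2) ((d y u)^2) ((d x v)^2) ((d u z)^2) ((d w v)^2)
     ((d w q)^2) ((d x q)^2) ((d z p)^2) ((d y p)^2) ((d p q)^2)) as S.
  rewrite (sqs G d Hmetric v w), (sqs G d Hmetric q w) in b1.
  rewrite (sqs G d Hmetric p z) in b2'.
  specialize (S ltac:(lra) ltac:(lra) hk c1 c2 b1 b2' hq hp h0).
  rewrite (sqs G d Hmetric u y), (sqs G d Hmetric v y), (sqs G d Hmetric y x) in bpsi.
  unfold psi22.
  set (ps := (d x u)^2 + (d y v)^2 + (d u v)^2 + (d x y)^2 - (d y u)^2 - (d x v)^2).
  assert (hps0 : 0 <= ps) by (unfold ps; lra).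
  assert (hps1 : ps <= (d x y)^2 - (d u v)^2) by (unfold ps; rewrite Exu, Eyv in *; lra).
  assert (hkp : k * ps <= ps).
  { assert (0 <= (1 - k) * ps) by (apply Rmult_le_pos; lra). lra. }
  lra.
Qed.
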